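(* Let $(\Omega,\mathcal R)$ be a bidirectional chemical network. Then there exists a completion $(\Omega_c,\mathcal R_c)$ of $(\Omega,\mathcal R)$ that is conservative, such that every $R\in\mathcal R_c$ satisfies $I(R)\neq\emptyset$ and $F(R)\neq\emptyset$, and that has no cycles (its cycle space is $\{0\}$). Moreover, $\pi_\Omega R\neq0$ for every $R\in\mathcal R_c$, and every $R\in\mathcal R$ is the image $\pi_\Omega\bar R$ of exactly one $\bar R\in\mathcal R_c$.
   Context: A chemical network is $(\Omega,\mathcal R)$ with $\Omega=\{1,\dots,N\}$ (or a finite index set) and $\mathcal R$ a finite set of nonzero integer vectors indexed by $\Omega$; each substance appears in some reaction. $I(R)=\{i:R(i)<0\}$, $F(R)=\{i:R(i)>0\}$. Bidirectional: $R\in\mathcal R\Rightarrow-R\in\mathcal R$. $\mathcal R_s$ contains exactly one of each pair $\{R,-R\}$; the matrix of reactions has the elements of $\mathcal R_s$ as columns and the cycle space is its kernel. The space of conservation laws is $\mathcal M=(\mathrm{span}\,\mathcal R)^\perp$; the network is conservative if $\mathcal M\cap(0,\infty)^{\Omega}\neq\emptyset$. For $A\subset\Omega_c$, $\pi_A v=(v(i))_{i\in A}$. A completion of $(\Omega,\mathcal R)$ is a chemical network $(\Omega_c,\mathcal R_c)$ with $\Omega\subset\Omega_c$ and $\mathcal R=\{\pi_\Omega R:R\in\mathcal R_c\}$. *)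

(* Defs.v *)
From HB Require Import structures.
From mathcomp Require Import all_boot all_order all_algebra.
From mathcomp Require Import finmap.
From mathcomp Require Import reals.

Set Implicit Arguments.
Unset Strict Implicit.
Unset Printing Implicit Defensive.

Import Order.TTheory GRing.Theory Num.Theory.
Local Open Scope ring_scope.
Local Open Scope fset_scope.

Notation reaction S := {ffun S -> int}.

Definition chem_network (S : finType) (Rs : {fset reaction S}) : Prop :=
  (forall r, r \in Rs -> r != 0) /\
  (forall i : S, exists2 r, r \in Rs & r i != 0).

Definition bidirectional (S : finType) (Rs : {fset reaction S}) : Prop :=
  forall r, r \in Rs -> - r \in Rs.

Definition I_set (S : finType) (r : reaction S) : {set S} := [set i | r i < 0].
Definition F_set (S : finType) (r : reaction S) : {set S} := [set i | 0 < r i].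

Definition proj (S Sc : finType) (e : S -> Sc) (r : reaction Sc) : reaction S :=
  [ffun i => r (e i)].

(* (Omega_c, Rc) is a completion of (Omega, Rs), with Omega identified with a
   subset of Omega_c through the injection e. *)
Definition completion (S Sc : finType) (e : S -> Sc)
    (Rs : {fset reaction S}) (Rc : {fset reaction Sc}) : Prop :=
  injective e /\ chem_network Rc /\
  (forall r, r \in Rc -> proj e r \in Rs) /\
  (forall r, r \in Rs -> exists2 rb, rb \in Rc & proj e rb = r).

(* conservative: some strictly positive (real) vector lies in
   M = (span Rc)^perp. *)
Definition conservative (R : realType) (S : finType) (Rs : {fset reaction S})
  : Prop :=
  exists m : S -> R, (forall i, 0 < m i) /\
    (forall r, r \in Rs -> \sum_(i : S) m i * (r i)%:~R = 0).

Definition is_Rs (S : finType) (Rs Rsub : {fset reaction S}) : Prop :=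
  Rsub `<=` Rs /\ (forall r, r \in Rs -> (r \in Rsub) (+) (- r \in Rsub)).

Definition no_cycles (R : realType) (S : finType) (Rs : {fset reaction S})
  : Prop :=
  forall Rsub, is_Rs Rs Rsub ->
  forall c : reaction S -> R,
    (forall i : S, \sum_(r <- Rsub) c r * (r i)%:~R = 0) ->
    forall r, r \in Rsub -> c r = 0.

(* Main.v *)
Require Import Defs.
From HB Require Import structures.
From mathcomp Require Import all_boot all_order all_algebra.
From mathcomp Require Import finmap.
From mathcomp Require Import reals.
From mathcomp Require Import zify lra.
Import Order.TTheory GRing.Theory Num.Theory.
Local Open Scope ring_scope.
Local Open Scope fset_scope.
Set Implicit Arguments.
Unset Strict Implicit.

Definition coef (S : finType) (r x : {ffun S -> int}) : int :=
  (if x == r then 1 else 0) - (if x == - r then 1 else 0).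

Definition Sc (S : finType) (Rs : {fset {ffun S -> int}}) : finType := (S + Rs)%type.

Definition rbar (S : finType) (Rs : {fset {ffun S -> int}}) (r : {ffun S -> int})
  : {ffun Sc Rs -> int} :=
  [ffun z => match z with inl i => r i | inr t => coef r (val t) end].

Lemma coefN (S : finType) (r x : {ffun S -> int}) : coef (- r) x = - coef r x.
Proof. by rewrite /coef opprK opprB addrC. Qed.

Lemma rbarN (S : finType) (Rs : {fset {ffun S -> int}}) r :
  rbar Rs (- r) = - rbar Rs r.
Proof.
by apply/ffunP => -[i|t]; rewrite !ffunE //= coefN.
Qed.

Lemma projrb (S : finType) (Rs : {fset {ffun S -> int}}) r :
  proj inl (rbar Rs r) = r.
Proof. by apply/ffunP => i; rewrite !ffunE. Qed.

Lemma neqN (S : finType) (r : {ffun S -> int}) : r != 0 -> r != - r.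
Proof.
move=> h; apply/negP => /eqP E; move/negP: h; apply; apply/eqP.
have : (r + r = 0)%R by rewrite {2}E subrr.
move=> h2; apply/ffunP => i; have := congr1 (fun f : {ffun S -> int} => f i) h2.
rewrite !ffunE => h3; apply/eqP; have : r i *+ 2 == 0 by rewrite mulr2n h3.
by rewrite mulrn_eq0.
Qed.

Lemma coef_self (S : finType) (r : {ffun S -> int}) : r != 0 -> coef r r = 1.
Proof. by move=> h; rewrite /coef eqxx (negPf (neqN h)) subr0. Qed.

Lemma coef_Nself (S : finType) (r : {ffun S -> int}) : r != 0 -> coef r (- r) = -1.
Proof.
move=> h; rewrite /coef eqxx.
have : (- r != r) by rewrite eq_sym neqN.
by move/negPf => ->; rewrite sub0r.
Qed.

Lemma coef_other (S : finType) (r x : {ffun S -> int}) :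
  x != r -> x != - r -> coef r x = 0.
Proof. by rewrite /coef => /negPf -> /negPf ->; rewrite subrr. Qed.

Theorem proposition6p2 (R : realType) (S : finType) (Rs : {fset {ffun S -> int}}) :
  chem_network Rs -> bidirectional Rs ->
  exists (Sc : finType) (e : S -> Sc) (Rc : {fset {ffun Sc -> int}}),
    completion e Rs Rc /\
    conservative R Rc /\
    (forall r, r \in Rc -> I_set r != set0 /\ F_set r != set0) /\
    no_cycles R Rc /\
    (forall r, r \in Rc -> proj e r != 0) /\
    (forall r, r \in Rs -> exists! rb, rb \in Rc /\ proj e rb = r).
Proof.
move=> [nz cov] bid.
exists (Sc Rs), inl, [fset rbar Rs r | r in Rs].
have memRc : forall x, x \in [fset rbar Rs r | r in Rs] <-> exists2 r, r \in Rs & x = rbar Rs r.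
  by move=> x; split => [/imfsetP [r hr ->]|[r hr ->]]; [exists r | apply: in_imfset].
have projRc : forall x, x \in [fset rbar Rs r | r in Rs] -> proj inl x \in Rs.
  by move=> x /memRc [r hr ->]; rewrite projrb.
split.
  split; first by move=> a b [].
  split.
    split.
      move=> x hx; apply/negP => /eqP x0.
      have := nz _ (projRc x hx); rewrite x0 => /eqP; apply; apply/ffunP => i; by rewrite !ffunE.
    move=> [i|t].
      have [r hr ri] := cov i; exists (rbar Rs r); first by apply/memRc; exists r.
      by rewrite ffunE.
    exists (rbar Rs (val t)); first by apply/memRc; exists (val t) => //; apply: valP.
    by rewrite ffunE coef_self ?nz //; apply: valP.
  split; first exact: projRc.
  by move=> r hr; exists (rbar Rs r); [apply/memRc; exists r | rewrite projrb].
split.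
  pose sg (x : {ffun S -> int}) : R := \sum_(i : S) (x i)%:~R.
  pose mm (x : {ffun S -> int}) : R := (1 + Num.max 0 (- sg x))%R.
  exists (fun z => match z with inl _ => 1%R | inr t => mm (val t) end).
  split.
    move=> [i|t] //; rewrite /mm.
    by apply: (lt_le_trans ltr01); rewrite lerDl le_max lexx.
  move=> x /memRc [r hr ->].
  rewrite /Sc big_sumType /=.
  under eq_bigr do rewrite ffunE mul1r.
  under [X in (_ + X)%R]eq_bigr do rewrite ffunE.
  have -> : (\sum_(t : Rs) mm (val t) * (coef r (val t))%:~R = \sum_(x <- Rs) mm x * (coef r x)%:~R)%R.
    by rewrite big_seq_fsetE.
  have hN := bid _ hr.
  have nr := nz _ hr.
  rewrite (big_fsetD1 r hr) (big_fsetD1 (- r)) ?in_fsetD1 ?hN ?andbT; last by rewrite eq_sym neqN.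
  have -> : (\sum_(x <- Rs `\ r `\ - r) mm x * (coef r x)%:~R = 0)%R.
    rewrite big_seq big1 // => y; rewrite !in_fsetD1 => /andP [xn /andP [xr _]].
    by rewrite coef_other // mulr0.
  rewrite /= addr0.
  have sgN : sg (- r) = (- sg r)%R.
    by rewrite /sg -sumrN; apply: eq_bigr => i _; rewrite ffunE mulrNz.
  rewrite coef_self // coef_Nself // intrN rmorph1 mulr1 mulrN1.
  rewrite -/(sg r) /mm sgN opprK.
  have [h|h] := lerP 0 (sg r).
    rewrite max_l ?oppr_le0 //; lra.
  rewrite max_r ?oppr_ge0 ?(ltW h) //; lra.
split.
  move=> x /memRc [r hr ->]; have nr := nz _ hr; have hN := bid _ hr.
  split; apply/set0Pn.
    exists (inr [` hN]); rewrite inE ffunE /= coef_Nself //.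
  by exists (inr [` hr]); rewrite inE ffunE /= coef_self.
split.
  move=> Rsub [sub xo] c hc x xin.
  have xRc : x \in [fset rbar Rs r | r in Rs] by apply: (fsubsetP sub).
  have nNx : - x \notin Rsub by have := xo _ xRc; rewrite xin.
  move: xRc nNx => /memRc [r hr ex] nNx; have nr := nz _ hr.
  have := hc (inr [` hr]).
  rewrite (big_fsetD1 x xin) /=.
  have -> : (\sum_(y <- Rsub `\ x) c y * (y (inr [` hr]))%:~R = 0 :> R)%R.
    rewrite big_seq big1 // => y; rewrite in_fsetD1 => /andP [yx yin].
    have /memRc [s hs ey] := fsubsetP sub _ yin.
    rewrite ey ffunE /= coef_other ?mulr0 //.
      by apply: contra yx => /eqP rs; rewrite ey ex rs.
    apply/negP => /eqP rs; move/negP: nNx; apply.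
    by rewrite ex rs rbarN opprK -ey.
  by rewrite addr0 ex ffunE /= coef_self // rmorph1 mulr1.
split.
  by move=> x /projRc /nz.
move=> r hr; exists (rbar Rs r); split.
  by split; [apply/memRc; exists r | rewrite projrb].
by move=> y [/memRc [s hs ->]]; rewrite projrb => ->.
Qed.
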